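(* Let $(\mu_t)_{t\ge 0}$ and $(d_t)$ be sequences of real numbers such that: (i) for every $t$, $\mu_t>d_t$ if and only if $\mu_{t+1}>\mu_t$; (ii) there exists $t_0>0$ such that $|d_{t+1}-d_t|\le|\mu_{t+1}-\mu_t|$ for all $t\ge t_0$; (iii) $\sum_{t=0}^{\infty}|\mu_{t+1}-\mu_t|=\infty$. Then $\mu_t$ degenerates strongly, i.e. $\lim_{t\to\infty}|\mu_t-\mu_0|=\infty$ (equivalently, $\mu_t\to\infty$ or $\mu_t\to-\infty$).
   Context: $\mu_t$ models a user's interest level in an item at time $t$ and $d_t$ an action threshold at time $t$. A real sequence $(\mu_t)$ is said to degenerate strongly if $\lim_{t\to\infty}|\mu_t-\mu_0|=\infty$. *)

(* Defs.v *)
From Stdlib Require Import Reals.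
From Coquelicot Require Import Coquelicot.
Open Scope R_scope.

Definition degenerates_strongly (mu : nat -> R) : Prop :=
  is_lim_seq (fun t => Rabs (mu t - mu O)) p_infty.

(* Main.v *)
Require Import Defs.
From Stdlib Require Import Reals Lra Lia.
From Coquelicot Require Import Coquelicot.
Open Scope R_scope.

Theorem theorem4 (mu d : nat -> R)
  (Hi : forall t : nat, mu t > d t <-> mu (S t) > mu t)
  (Hii : exists t0 : nat, (0 < t0)%nat /\
          forall t : nat, (t0 <= t)%nat ->
            Rabs (d (S t) - d t) <= Rabs (mu (S t) - mu t))
  (Hiii : is_lim_seq (sum_n (fun t => Rabs (mu (S t) - mu t))) p_infty) :
  degenerates_strongly mu.
Proof.
  destruct Hii as [t0 [Ht0 Hd]].
  destruct t0 as [|k]; [lia|].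
  set (f := fun t => Rabs (mu (S t) - mu t)) in *.
  assert (Hs : exists s, (s = 1 \/ s = -1) /\ forall t, (S k <= t)%nat -> s * (mu (S t) - mu t) = f t).
  { destruct (Rlt_le_dec (d (S k)) (mu (S k))) as [Hlt|Hle].
    - assert (H : forall n, mu (n + S k)%nat > d (n + S k)%nat).
      { induction n as [|n IH]; [simpl; lra|].
        pose proof (proj1 (Hi _) IH) as Hm.
        pose proof (Hd (n + S k)%nat ltac:(lia)) as Hb.
        rewrite (Rabs_right (mu (S (n + S k)) - mu (n + S k)%nat)) in Hb by lra.
        pose proof (Rle_abs (d (S (n + S k)) - d (n + S k)%nat)).
        simpl. lra. }
      exists 1. split; [left; reflexivity|]. intros t Ht. unfold f.
      replace t with ((t - S k) + S k)%nat by lia.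
      pose proof (proj1 (Hi _) (H (t - S k)%nat)).
      rewrite Rabs_right by lra. lra.
    - assert (H : forall n, mu (n + S k)%nat <= d (n + S k)%nat).
      { induction n as [|n IH]; [simpl; lra|].
        assert (Hm : mu (S (n + S k)) <= mu (n + S k)%nat).
        { destruct (Rle_dec (mu (S (n + S k))) (mu (n + S k)%nat)) as [h|h]; [exact h|].
          apply Rnot_le_lt in h. apply (proj2 (Hi _)) in h. lra. }
        pose proof (Hd (n + S k)%nat ltac:(lia)) as Hb.
        rewrite (Rabs_left1 (mu (S (n + S k)) - mu (n + S k)%nat)) in Hb by lra.
        pose proof (Rle_abs (- (d (S (n + S k)) - d (n + S k)%nat))) as H0.
        rewrite Rabs_Ropp in H0.
        simpl. lra. }
      exists (-1). split; [right; reflexivity|]. intros t Ht. unfold f.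
      replace t with ((t - S k) + S k)%nat by lia.
      assert (Hm : mu (S (t - S k + S k)) <= mu (t - S k + S k)%nat).
      { destruct (Rle_dec (mu (S (t - S k + S k))) (mu (t - S k + S k)%nat)) as [h|h]; [exact h|].
        apply Rnot_le_lt in h. apply (proj2 (Hi _)) in h. pose proof (H (t - S k)%nat). lra. }
      rewrite Rabs_left1 by lra. lra. }
  destruct Hs as [s [Hs1 Hs]].
  assert (Hsum : forall n, s * (mu (S (n + S k)) - mu (S k)) = sum_n f (n + S k) - sum_n f k).
  { induction n as [|n IH].
    - simpl. rewrite sum_Sn. unfold plus; simpl. rewrite (Hs (S k)) by lia. lra.
    - change (S n + S k)%nat with (S (n + S k)).
      rewrite sum_Sn. unfold plus; simpl.
      rewrite <- (Hs (S (n + S k))) by lia. simpl in IH. lra. }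
  assert (Habs : Rabs s = 1).
  { destruct Hs1; subst; unfold Rabs; destruct Rcase_abs; lra. }
  unfold degenerates_strongly.
  apply (is_lim_seq_incr_n _ (S (S k))).
  apply (is_lim_seq_le_p_loc (fun n => sum_n f (n + S k) + (- sum_n f k + s * (mu (S k) - mu O)))).
  - exists O. intros n _.
    replace (n + S (S k))%nat with (S (n + S k)) by lia.
    pose proof (Hsum n).
    apply Rle_trans with (Rabs (s * (mu (S (n + S k)) - mu O))).
    + eapply Rle_trans; [|apply Rle_abs]. lra.
    + rewrite Rabs_mult, Habs. lra.
  - eapply is_lim_seq_plus.
    + exact (proj1 (is_lim_seq_incr_n (sum_n f) (S k) p_infty) Hiii).
    + apply is_lim_seq_const.
    + reflexivity.
Qed.
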